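(* Let $X=\{x_j:j\in J\}\subset\mathbb{R}^2$ be finite with $n=|J|$, quadratic min-power centre $s^*$, centroid $M$, and let $r\in J$ be such that $x_r$ is a point of $X$ farthest from $M$. The following are equivalent: (1) $|\Lambda|=1$; (2) $s^*=M_r$; (3) $M_j\in V(x_j)$ for some $j\in J$.
   Context: $P(s)=\sum_{i\in J}\|s-x_i\|^2+\max_{i\in J}\|s-x_i\|^2$; $s^*$ is its unique minimiser; $M=\frac1n\sum_i x_i$; $M_j=\frac{1}{n+1}\big(x_j+\sum_{i\in J}x_i\big)$; $V(x_j)=\{s:\|s-x_j\|=\max_{i\in J}\|s-x_i\|\}$ (the region of $x_j$ in the farthest point Voronoi diagram). A KKT multiplier vector for $s^*$ is $(\lambda_j)_{j\in J}$ with $\lambda_j\geq0$, $\sum_j\lambda_j=1$, $s^*=\sum_j\lambda_jM_j$, and $\lambda_j\big(\|s^*-x_j\|-\max_{i\in J}\|s^*-x_i\|\big)=0$ for all $j$. $|\Lambda|$ denotes the minimum, over all KKT multiplier vectors for $s^*$, of the number of nonzero entries. *)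

(* Defs.v *)
From HB Require Import structures.
From mathcomp Require Import all_boot all_order all_algebra.
From mathcomp Require Import reals.
Set Implicit Arguments. Unset Strict Implicit. Unset Printing Implicit Defensive.
Import Order.TTheory GRing.Theory Num.Theory.
Local Open Scope ring_scope.

Section Defs.
Variable R : realType.
Notation pt := 'rV[R]_2.

Definition enorm (u : pt) : R := Num.sqrt (\sum_(k < 2) u 0 k ^+ 2).

Variable J : finType.
Variable x : J -> pt.

(* max_{i in J} ||s - x_i|| (distances are >= 0, so 0 is a neutral element) *)
Definition maxdist (s : pt) : R := \big[Num.max/0]_(i : J) enorm (s - x i).

Definition Pfun (s : pt) : R :=
  \sum_(i : J) enorm (s - x i) ^+ 2 + maxdist s ^+ 2.

Definition centroid : pt := (#|J|%:R)^-1 *: \sum_(i : J) x i.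

Definition Mj (j : J) : pt := ((#|J|.+1)%:R)^-1 *: (x j + \sum_(i : J) x i).

Definition Vreg (j : J) : pt -> Prop := fun s => enorm (s - x j) = maxdist s.

Definition is_KKT (s : pt) (lam : J -> R) : Prop :=
  [/\ forall j, 0 <= lam j,
      \sum_(j : J) lam j = 1,
      s = \sum_(j : J) lam j *: Mj j
    & forall j, lam j * (enorm (s - x j) - maxdist s) = 0].

Definition nnz (lam : J -> R) : nat := #|[set j : J | lam j != 0]|.

(* |Lambda| = k : k is the minimum, over all KKT multiplier vectors for s,
   of the number of nonzero entries. *)
Definition card_Lambda_is (s : pt) (k : nat) : Prop :=
  (exists2 lam, is_KKT s lam & nnz lam = k) /\
  (forall lam, is_KKT s lam -> (k <= nnz lam)%N).
End Defs.

(* Main.v *)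
Require Import Defs.
From HB Require Import structures.
From mathcomp Require Import all_boot all_order all_algebra.
From mathcomp Require Import reals.
From mathcomp Require Import ring lra.
Import Order.TTheory GRing.Theory Num.Theory.
Set Implicit Arguments. Unset Strict Implicit. Unset Printing Implicit Defensive.
Local Open Scope ring_scope.


Lemma sum2 (R : ringType) (F : 'I_2 -> R) : \sum_(k < 2) F k = F 0 + F 1.
Proof. rewrite !big_ord_recl big_ord0 addr0. congr (_ + F _); exact/val_inj. Qed.

Definition sq (R : realType) (p : 'rV[R]_2) : R := p 0 0 ^+ 2 + p 0 1 ^+ 2.

Lemma sq_ge0 (R : realType) (p : 'rV[R]_2) : 0 <= sq p.
Proof. by rewrite /sq addr_ge0 // sqr_ge0. Qed.

Lemma enorm2 (R : realType) (p : 'rV[R]_2) : enorm p ^+ 2 = sq p.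
Proof.
rewrite /enorm sum2 sqr_sqrtr //; exact: (sq_ge0 p).
Qed.

Lemma enormE (R : realType) (p : 'rV[R]_2) : enorm p = Num.sqrt (sq p).
Proof. by rewrite /enorm sum2. Qed.

Lemma enorm_ge0 (R : realType) (p : 'rV[R]_2) : 0 <= enorm p.
Proof. by rewrite enormE sqrtr_ge0. Qed.

Lemma pt_eq (R : realType) (p q : 'rV[R]_2) :
  p 0 0 = q 0 0 -> p 0 1 = q 0 1 -> p = q.
Proof.
move=> h0 h1; apply/matrixP => i k; rewrite (ord1 i).
case: k => [[|[|//]]] Hk.
- by rewrite (_ : Ordinal Hk = 0) //; apply/val_inj.
- by rewrite (_ : Ordinal Hk = 1) //; apply/val_inj.
Qed.

Lemma maxdist_ge0 (R : realType) (J : finType) (x : J -> 'rV[R]_2) s :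
  0 <= maxdist x s.
Proof. exact: bigmax_ge_id. Qed.

Lemma le_maxdist (R : realType) (J : finType) (x : J -> 'rV[R]_2) s i :
  enorm (s - x i) <= maxdist x s.
Proof. exact: le_bigmax. Qed.

Lemma maxdist_le (R : realType) (J : finType) (x : J -> 'rV[R]_2) s c :
  0 <= c -> (forall i, enorm (s - x i) <= c) -> maxdist x s <= c.
Proof. by move=> h1 h2; apply: bigmax_le. Qed.

Lemma le_maxdist2 (R : realType) (J : finType) (x : J -> 'rV[R]_2) s i :
  sq (s - x i) <= maxdist x s ^+ 2.
Proof.
rewrite -enorm2; apply: lerXn2r; rewrite ?nnegrE ?enorm_ge0 ?maxdist_ge0 ?le_maxdist //.
Qed.

Lemma maxdist2_le (R : realType) (J : finType) (x : J -> 'rV[R]_2) s B :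
  0 <= B -> (forall i, sq (s - x i) <= B) -> maxdist x s ^+ 2 <= B.
Proof.
move=> hB h.
have : maxdist x s <= Num.sqrt B.
  apply: maxdist_le; first exact: sqrtr_ge0.
  by move=> i; rewrite enormE ler_sqrt.
move=> hm; rewrite -(sqr_sqrtr hB); apply: lerXn2r; rewrite ?nnegrE ?maxdist_ge0 ?sqrtr_ge0 //.
Qed.


Lemma sumsq (R : realType) (J : finType) (f : J -> R) (t : R) :
  \sum_i (t - f i) ^+ 2 =
  #|J|%:R * t ^+ 2 - 2 * t * \sum_i f i + \sum_i f i ^+ 2.
Proof.
rewrite (eq_bigr (fun i => t ^+ 2 - (2 * t) * f i + f i ^+ 2)); last by move=> i _; ring.
rewrite big_split /= sumrB sumr_const -mulr_sumr.
by rewrite [#|J|%:R * _]mulr_natl.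
Qed.

Lemma quad1 (R : realType) (J : finType) (f : J -> R) (a t m : R) :
  (#|J|%:R + 1) * m = a + \sum_i f i ->
  \sum_i (m - f i) ^+ 2 + (m - a) ^+ 2 <= \sum_i (t - f i) ^+ 2 + (t - a) ^+ 2.
Proof.
move=> hm; rewrite !sumsq.
set n := (#|J|%:R : R); set F := \sum_i f i; set Q := \sum_i f i ^+ 2.
have hF : F = (n + 1) * m - a by rewrite hm addrAC subrr add0r.
rewrite hF -subr_ge0.
have -> : n * t ^+ 2 - 2 * t * ((n + 1) * m - a) + Q + (t - a) ^+ 2 -
   (n * m ^+ 2 - 2 * m * ((n + 1) * m - a) + Q + (m - a) ^+ 2) = (n + 1) * (t - m) ^+ 2 by ring.
by rewrite mulr_ge0 // ?sqr_ge0 // addr_ge0.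
Qed.

Lemma Mj_coord (R : realType) (J : finType) (x : J -> 'rV[R]_2) j k :
  (#|J|%:R + 1) * Mj x j 0 k = x j 0 k + \sum_i x i 0 k.
Proof.
rewrite /Mj !mxE summxE natr1 mulrA mulfV ?mul1r //.
by rewrite pnatr_eq0.
Qed.

Lemma centroid_coord (R : realType) (J : finType) (x : J -> 'rV[R]_2) k :
  (0 < #|J|)%N -> #|J|%:R * centroid x 0 k = \sum_i x i 0 k.
Proof.
move=> hJ; rewrite /centroid !mxE summxE mulrA mulfV ?mul1r //.
by rewrite pnatr_eq0 -lt0n.
Qed.

Lemma sum_sq (R : realType) (J : finType) (x : J -> 'rV[R]_2) t :
  \sum_i sq (t - x i) = \sum_i (t 0 0 - x i 0 0) ^+ 2 + \sum_i (t 0 1 - x i 0 1) ^+ 2.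
Proof. by rewrite -big_split /=; apply: eq_bigr => i _; rewrite /sq !mxE. Qed.

Lemma Pfun_ge (R : realType) (J : finType) (x : J -> 'rV[R]_2) t j :
  \sum_i sq (t - x i) + sq (t - x j) <= Pfun x t.
Proof.
rewrite /Pfun lerD ?le_maxdist2 //.
by rewrite le_eqVlt; apply/orP; left; apply/eqP; apply: eq_bigr => i _; rewrite enorm2.
Qed.

Lemma Pfun_Vreg (R : realType) (J : finType) (x : J -> 'rV[R]_2) t j :
  Vreg x j t -> Pfun x t = \sum_i sq (t - x i) + sq (t - x j).
Proof.
move=> hV; rewrite /Pfun -hV enorm2; congr (_ + _).
by apply: eq_bigr => i _; rewrite enorm2.
Qed.

Lemma Mj_min (R : realType) (J : finType) (x : J -> 'rV[R]_2) j t :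
  Vreg x j (Mj x j) -> Pfun x (Mj x j) <= Pfun x t.
Proof.
move=> hV; rewrite (Pfun_Vreg hV); apply: le_trans (Pfun_ge x t j).
have hm0 := Mj_coord x j 0; have hm1 := Mj_coord x j 1.
move: (Mj x j) hm0 hm1 => m hm0 hm1.
rewrite !sum_sq /sq !mxE.
have h0 := @quad1 R J (fun i => x i 0 0) _ (t 0 0) _ hm0.
have h1 := @quad1 R J (fun i => x i 0 1) _ (t 0 1) _ hm1.
simpl in h0, h1; lra.
Qed.


Lemma alg32 (R : realType) (n p0 p1 q0 q1 : R) :
  0 <= n ->
  ((p0 - (n + 1) * q0) ^+ 2 + (p1 - (n + 1) * q1) ^+ 2 <= (n * p0) ^+ 2 + (n * p1) ^+ 2) ->
  p0^+ 2 + p1^+ 2 <= q0^+ 2 + q1^+ 2 ->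
  p0 = q0 /\ p1 = q1.
Proof.
move=> hn H K.
have hK : 0 <= n * (n + 1) * (q0^+ 2 + q1^+ 2 - (p0^+ 2 + p1^+ 2)).
  by rewrite mulr_ge0 ?subr_ge0 // mulr_ge0 // addr_ge0.
have hG : (n + 1) * ((p0 - q0)^+ 2 + (p1 - q1)^+ 2) <= 0 by nra.
have hG' : (p0 - q0)^+ 2 + (p1 - q1)^+ 2 <= 0.
  by rewrite -(pmulr_rle0 _ (_ : 0 < n + 1)) // ltr_wpDl.
have a0 : (p0 - q0)^+ 2 = 0.
  apply/le_anti/andP; split; last exact: sqr_ge0.
  by apply: le_trans hG'; rewrite lerDl sqr_ge0.
have a1 : (p1 - q1)^+ 2 = 0.
  apply/le_anti/andP; split; last exact: sqr_ge0.
  by apply: le_trans hG'; rewrite lerDr sqr_ge0.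
move/eqP: a0; rewrite sqrf_eq0 subr_eq0 => /eqP ->.
by move/eqP: a1; rewrite sqrf_eq0 subr_eq0 => /eqP ->.
Qed.

Lemma alg23 (R : realType) (n e u0 u1 a0 a1 eps m : R) :
  0 <= n -> 0 < e -> e * (n + 1) = 1 ->
  a0 ^+ 2 + a1 ^+ 2 <= u0 ^+ 2 + u1 ^+ 2 ->
  (e * u0 - a0) ^+ 2 + (e * u1 - a1) ^+ 2 <= m ->
  0 < eps ->
  2 * eps * (u0 ^+ 2 + u1 ^+ 2) <= m - (((e - 1) * u0) ^+ 2 + ((e - 1) * u1) ^+ 2) ->
  2 * (n + 1) * eps ^+ 2 * (u0 ^+ 2 + u1 ^+ 2) <= m - (((e - 1) * u0) ^+ 2 + ((e - 1) * u1) ^+ 2) ->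
  (e * u0 - a0 - eps * u0) ^+ 2 + (e * u1 - a1 - eps * u1) ^+ 2 <=
    m + 2 * n * e * eps * (u0 ^+ 2 + u1 ^+ 2) - n * eps ^+ 2 * (u0 ^+ 2 + u1 ^+ 2).
Proof.
move=> hn he hen ha hDs heps h1 h2.
set U := u0 ^+ 2 + u1 ^+ 2 in ha hDs h1 h2 *.
set Ds := (e * u0 - a0) ^+ 2 + (e * u1 - a1) ^+ 2 in ha hDs h1 h2 *.
set Dr := ((e - 1) * u0) ^+ 2 + ((e - 1) * u1) ^+ 2 in ha hDs h1 h2 *.
set d := m - Dr in ha hDs h1 h2 *.
have hd : d = m - Dr by [].
clearbody d.
set g := U - (a0 * u0 + a1 * u1).
have Hid : (e * u0 - a0 - eps * u0) ^+ 2 + (e * u1 - a1 - eps * u1) ^+ 2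
   - (2 * n * e * eps * U - n * eps ^+ 2 * U)
   = Ds - 2 * eps * g + (n + 1) * eps ^+ 2 * U.
  apply/eqP; rewrite -subr_eq0; apply/eqP.
  transitivity ((1 - e * (n + 1)) * (2 * eps * U)); last by rewrite hen subrr mul0r.
  by rewrite /Ds /g /U; ring.
have hg : 0 <= g.
  rewrite /g subr_ge0.
  have : 0 <= (a0 - u0) ^+ 2 + (a1 - u1) ^+ 2 by rewrite addr_ge0 // sqr_ge0.
  rewrite /U in ha *; nra.
have hDr : Ds - Dr = (a0 ^+ 2 + a1 ^+ 2 - U) + 2 * e * g by rewrite /Ds /Dr /g /U; ring.
have hDr' : Ds - Dr <= 2 * e * g.
  rewrite hDr; have : a0 ^+ 2 + a1 ^+ 2 - U <= 0 by rewrite subr_le0.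
  lra.
have hU : 0 <= U by rewrite /U addr_ge0 // sqr_ge0.
suff : Ds - 2 * eps * g + (n + 1) * eps ^+ 2 * U <= m.
  by rewrite -Hid lerBlDr addrA.
have hepsg : 0 <= eps * g by rewrite mulr_ge0 // ltW.
case: (lerP Ds (m - d / 2)) => hc.
  have : (n + 1) * eps ^+ 2 * U <= d / 2.
    rewrite ler_pdivlMr //; lra.
  lra.
have h3 : d / 2 < 2 * e * g by lra.
have h4 : (n + 1) * d / 2 < 2 * g.
  have : (n + 1) * (d / 2) < (n + 1) * (2 * e * g) by rewrite ltr_pM2l // ltr_wpDl.
  have -> : (n + 1) * (2 * e * g) = 2 * g * (e * (n + 1)) by ring.
  by rewrite hen mulr1 mulrA.
have h5 : (n + 1) * eps * U <= (n + 1) * d / 2.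
  rewrite -!mulrA ler_pM2l ?ltr_wpDl //.
  rewrite ler_pdivlMr //; lra.
have h6 : (n + 1) * eps ^+ 2 * U <= 2 * eps * g.
  have : eps * ((n + 1) * eps * U) <= eps * (2 * g).
    by rewrite ler_pM2l //; apply: ltW; apply: le_lt_trans h5 h4.
  have -> : eps * ((n + 1) * eps * U) = (n + 1) * eps ^+ 2 * U by ring.
  by have -> : eps * (2 * g) = 2 * eps * g by ring.
lra.
Qed.

Lemma alg32' (R : realType) (n m0 m1 M0 M1 a0 a1 b0 b1 : R) :
  0 <= n ->
  (n + 1) * m0 = a0 + n * M0 -> (n + 1) * m1 = a1 + n * M1 ->
  (m0 - b0) ^+ 2 + (m1 - b1) ^+ 2 <= (m0 - a0) ^+ 2 + (m1 - a1) ^+ 2 ->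
  (M0 - a0) ^+ 2 + (M1 - a1) ^+ 2 <= (M0 - b0) ^+ 2 + (M1 - b1) ^+ 2 ->
  a0 = b0 /\ a1 = b1.
Proof.
move=> hn e0 e1 H K.
have [h0 h1] : a0 - M0 = b0 - M0 /\ a1 - M1 = b1 - M1.
  apply: alg32 hn _ _.
    have E : forall (m a b M : R), (n + 1) * m = a + n * M ->
      (a - M - (n + 1) * (b - M)) ^+ 2 = (n + 1) ^+ 2 * (m - b) ^+ 2 /\
      (n * (a - M)) ^+ 2 = (n + 1) ^+ 2 * (m - a) ^+ 2.
      move=> m a b M hm; split.
        have -> : a - M - (n + 1) * (b - M) = (n + 1) * m - (n + 1) * b by rewrite hm; ring.
        by rewrite -mulrBr exprMn.
      have -> : n * (a - M) = - ((n + 1) * m - (n + 1) * a) by rewrite hm; ring.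
      by rewrite sqrrN -mulrBr exprMn.
    have [-> ->] := E _ _ b0 _ e0; have [-> ->] := E _ _ b1 _ e1.
    by rewrite -!mulrDr ler_wpM2l // sqr_ge0.
  have -> : (a0 - M0) ^+ 2 = (M0 - a0) ^+ 2 by ring.
  have -> : (a1 - M1) ^+ 2 = (M1 - a1) ^+ 2 by ring.
  have -> : (b0 - M0) ^+ 2 = (M0 - b0) ^+ 2 by ring.
  by have -> : (b1 - M1) ^+ 2 = (M1 - b1) ^+ 2 by ring.
by split; [exact: (addIr (- M0) h0) | exact: (addIr (- M1) h1)].
Qed.

Lemma eps_exists (R : realType) (n U d : R) : 0 <= n -> 0 < U -> 0 < d ->
  exists eps : R, [/\ 0 < eps, 2 * eps * U <= d & 2 * (n + 1) * eps ^+ 2 * U <= d].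
Proof.
move=> hn hU hd.
set K := 4 * (n + 1) * (U + d).
have hK : 0 < K by rewrite /K; nra.
exists (d / K).
have hE : d / K * K = d by rewrite divfK // gt_eqF.
have he : 0 < d / K by rewrite divr_gt0.
move: (d / K) hE he => eps hE he.
have h1 : 2 * eps * U <= d.
  rewrite -hE; have : 2 * U <= K by rewrite /K; nra.
  move=> h; nra.
split => //.
have h2 : 2 * (n + 1) * eps * U <= K.
  have : eps * U <= 2 * (U + d) by nra.
  rewrite /K => h; nra.
have -> : 2 * (n + 1) * eps ^+ 2 * U = eps * (2 * (n + 1) * eps * U) by ring.
rewrite -[X in _ <= X]hE; nra.
Qed.

Lemma sq2_0 (R : realType) (a b : R) : a ^+ 2 + b ^+ 2 <= 0 -> a = 0 /\ b = 0.
Proof.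
move=> h.
have ha : a ^+ 2 = 0.
  apply/le_anti/andP; split; last exact: sqr_ge0.
  by apply: le_trans h; rewrite lerDl sqr_ge0.
have hb : b ^+ 2 = 0.
  apply/le_anti/andP; split; last exact: sqr_ge0.
  by apply: le_trans h; rewrite lerDr sqr_ge0.
by split; apply/eqP; rewrite -sqrf_eq0; apply/eqP.
Qed.

Lemma e_shift (R : realType) (e n a b : R) : e * (n + 1) = 1 ->
  e * (a + n * b) = b + e * (a - b).
Proof.
move=> h; apply/eqP; rewrite -subr_eq0; apply/eqP.
by transitivity ((e * (n + 1) - 1) * b); [ring | rewrite h subrr mul0r].
Qed.


Lemma enorm_le_sq (R : realType) (p q : 'rV[R]_2) : enorm p <= enorm q -> sq p <= sq q.
Proof. by rewrite !enormE ler_sqrt // sq_ge0. Qed.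

Lemma Vreg_sq (R : realType) (J : finType) (x : J -> 'rV[R]_2) j s i :
  Vreg x j s -> sq (s - x i) <= sq (s - x j).
Proof. by move=> hV; rewrite -[sq (s - x j)]enorm2 hV le_maxdist2. Qed.

Lemma j_eq_r (R : realType) (J : finType) (x : J -> 'rV[R]_2) (r j : J) :
  (0 < #|J|)%N ->
  (forall i : J, enorm (centroid x - x i) <= enorm (centroid x - x r)) ->
  Vreg x j (Mj x j) -> x j = x r.
Proof.
move=> hJ hr hV.
have H := Vreg_sq r hV.
have K := enorm_le_sq (hr j).
have e0 := Mj_coord x j 0; have e1 := Mj_coord x j 1.
have c0 := centroid_coord x 0 hJ; have c1 := centroid_coord x 1 hJ.
rewrite -c0 in e0; rewrite -c1 in e1.
move: (Mj x j) (centroid x) e0 e1 H K => m M e0 e1 H K.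
move: H K; rewrite /sq !mxE => H K.
have [h0 h1] := alg32' (ler0n _ _) e0 e1 H K.
by apply: pt_eq.
Qed.

Lemma Mr_Vreg (R : realType) (J : finType) (x : J -> 'rV[R]_2) (r : J) :
  (0 < #|J|)%N ->
  (forall i : J, enorm (centroid x - x i) <= enorm (centroid x - x r)) ->
  (forall t, Pfun x t <= Pfun x (Mj x r) -> t = Mj x r) ->
  Vreg x r (Mj x r).
Proof.
move=> hJ hr huniq.
apply/eqP; rewrite eq_le le_maxdist /= leNgt; apply/negP => hlt.
have c0 := centroid_coord x 0 hJ; have c1 := centroid_coord x 1 hJ.
have m0 := Mj_coord x r 0; have m1 := Mj_coord x r 1.
have hfar := fun i => enorm_le_sq (hr i).
have hDs := fun i => le_maxdist2 x (Mj x r) i.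
have hPs : Pfun x (Mj x r) = \sum_i sq (Mj x r - x i) + maxdist x (Mj x r) ^+ 2.
  by rewrite /Pfun; congr (_ + _); apply: eq_bigr => i _; rewrite enorm2.
have hPt : forall t, Pfun x t = \sum_i sq (t - x i) + maxdist x t ^+ 2.
  by move=> t; rewrite /Pfun; congr (_ + _); apply: eq_bigr => i _; rewrite enorm2.
have hmax_ge := maxdist_ge0 x (Mj x r).
have hen_ge := enorm_ge0 (Mj x r - x r).
have hsqr : sq (Mj x r - x r) < maxdist x (Mj x r) ^+ 2.
  rewrite -enorm2; move: hlt hmax_ge hen_ge.
  move: (maxdist x (Mj x r)) (enorm (Mj x r - x r)) => a b; nra.
rewrite -c0 in m0; rewrite -c1 in m1.
move: hlt hen_ge hmax_ge => _ _ _.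
have hmle := fun B => @maxdist2_le R J x (Mj x r) B.
move: (maxdist x (Mj x r)) hDs hPs hsqr hmle => m hDs hPs hsqr hmle.
move: (Mj x r) (centroid x) huniq m0 m1 hfar hDs hPs hsqr c0 c1 hmle =>
  s M huniq m0 m1 hfar hDs hPs hsqr c0 c1 hmle.
have hn : 0 <= (#|J|%:R : R) by [].
set n := (#|J|%:R : R) in hn m0 m1 c0 c1 *.
have hn1 : n + 1 != 0 by rewrite gt_eqF // ltr_wpDl.
set e := (n + 1)^-1.
have hen : e * (n + 1) = 1 by rewrite mulVf.
have he : 0 < e by rewrite invr_gt0 ltr_wpDl.
have hs0 : s 0 0 = M 0 0 + e * (x r 0 0 - M 0 0).
  by rewrite -(e_shift _ _ hen) -m0 mulrA hen mul1r.
have hs1 : s 0 1 = M 0 1 + e * (x r 0 1 - M 0 1).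
  by rewrite -(e_shift _ _ hen) -m1 mulrA hen mul1r.
set u0 := x r 0 0 - M 0 0 in hs0 hs1 *.
set u1 := x r 0 1 - M 0 1 in hs0 hs1 *.
have hsqE : forall a b : R, (a - b) ^+ 2 = (b - a) ^+ 2 by move=> a b; ring.
have hfar' : forall i, (x i 0 0 - M 0 0) ^+ 2 + (x i 0 1 - M 0 1) ^+ 2 <= u0 ^+ 2 + u1 ^+ 2.
  move=> i; have := hfar i; rewrite /sq !mxE !(hsqE (M 0 0)) !(hsqE (M 0 1)) //.
have hDs' : forall i, (e * u0 - (x i 0 0 - M 0 0)) ^+ 2 + (e * u1 - (x i 0 1 - M 0 1)) ^+ 2 <= m ^+ 2.
  move=> i; have := hDs i; rewrite /sq !mxE hs0 hs1.
  have -> : M 0 0 + e * u0 - x i 0 0 = e * u0 - (x i 0 0 - M 0 0) by ring.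
  by have -> : M 0 1 + e * u1 - x i 0 1 = e * u1 - (x i 0 1 - M 0 1) by ring.
have hDr : sq (s - x r) = ((e - 1) * u0) ^+ 2 + ((e - 1) * u1) ^+ 2.
  by rewrite /sq !mxE hs0 hs1 /u0 /u1; ring.
case: (eqVneq (u0 ^+ 2 + u1 ^+ 2) 0) => hU0.
  have hall : forall i, x i = x r.
    move=> i; have := hfar' i; rewrite hU0 => /sq2_0 [a0 a1].
    have [b0 b1] : u0 = 0 /\ u1 = 0 by apply: sq2_0; rewrite hU0.
    apply: pt_eq.
      by move/eqP: a0; move/eqP: b0; rewrite /u0 !subr_eq0 => /eqP -> /eqP ->.
    by move/eqP: a1; move/eqP: b1; rewrite /u1 !subr_eq0 => /eqP -> /eqP ->.
  have : m ^+ 2 <= sq (s - x r) by apply: hmle => [|i]; rewrite ?sq_ge0 ?hall.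
  by rewrite leNgt hsqr.
have hU : 0 < u0 ^+ 2 + u1 ^+ 2 by rewrite lt_def hU0 /= addr_ge0 ?sqr_ge0.
set U := u0 ^+ 2 + u1 ^+ 2 in hU hU0 hfar' *.
have hd : 0 < m ^+ 2 - sq (s - x r) by rewrite subr_gt0.
have [eps [heps h1 h2]] := eps_exists hn hU hd.
rewrite hDr in h1 h2.
set t := s - eps *: (x r - M).
have ht0 : t 0 0 = s 0 0 - eps * u0 by rewrite /t !mxE.
have ht1 : t 0 1 = s 0 1 - eps * u1 by rewrite /t !mxE.
clearbody t.
set B := m ^+ 2 + 2 * n * e * eps * U - n * eps ^+ 2 * U.
have hper : forall i, sq (t - x i) <= B.
  move=> i; have := alg23 hn he hen (hfar' i) (hDs' i) heps h1 h2.
  rewrite /sq !mxE ht0 ht1 hs0 hs1.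
  have -> : M 0 0 + e * u0 - eps * u0 - x i 0 0 = e * u0 - (x i 0 0 - M 0 0) - eps * u0 by ring.
  by have -> : M 0 1 + e * u1 - eps * u1 - x i 0 1 = e * u1 - (x i 0 1 - M 0 1) - eps * u1 by ring.
have hB : 0 <= B by apply: le_trans (hper r); apply: sq_ge0.
have hle : Pfun x t <= Pfun x s.
  rewrite hPt hPs.
  apply: (@le_trans _ _ (\sum_i sq (t - x i) + B)); first by rewrite lerD2l maxdist2_le.
  rewrite le_eqVlt; apply/orP; left; apply/eqP.
  rewrite !sum_sq !sumsq -c0 -c1 ht0 ht1 hs0 hs1 /B.
  by rewrite -/n /U; ring.
have := huniq t hle => htE.
rewrite htE in ht0 ht1.
have k0 : eps * u0 = 0 by lra.
have k1 : eps * u1 = 0 by lra.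
move/eqP: k0; rewrite mulf_eq0 gt_eqF //= => /eqP k0.
move/eqP: k1; rewrite mulf_eq0 gt_eqF //= => /eqP k1.
by move/eqP: hU0; rewrite /U k0 k1 expr0n /= addr0.
Qed.

Unset Implicit Arguments.

Theorem proposition1 (R : realType) (J : finType) (x : J -> 'rV[R]_2)
    (x_inj : injective x) (J_nonempty : (0 < #|J|)%N)
    (sstar : 'rV[R]_2)
    (sstar_min : forall t : 'rV[R]_2, Pfun x sstar <= Pfun x t)
    (sstar_unique : forall t : 'rV[R]_2, Pfun x t <= Pfun x sstar -> t = sstar)
    (r : J)
    (r_far : forall i : J, enorm (centroid x - x i) <= enorm (centroid x - x r)) :
  [<-> card_Lambda_is x sstar 1;
       sstar = Mj x r;
       exists j : J, Vreg x j (Mj x j)].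
Proof.
have hA : forall j, Vreg x j (Mj x j) -> sstar = Mj x j.
  by move=> j hV; apply/esym/sstar_unique/Mj_min.
have h13 : card_Lambda_is x sstar 1 -> exists j, Vreg x j (Mj x j).
  move=> [[lam [h0 hsum hs hc] hnnz] _].
  have /cards1P [j hj] : #|[set j | lam j != 0]| == 1%N by rewrite -[#|_|]/(nnz lam) hnnz.
  have hz : forall i, i != j -> lam i = 0.
    move=> i hij.
    have : (i \in [set j | lam j != 0]) = (i \in [set j]) by rewrite hj.
    by rewrite !inE (negbTE hij) => /negbFE/eqP.
  have hlj : lam j = 1.
    by rewrite -hsum (bigD1 j) //= big1 ?addr0 // => i /hz.
  have hsE : sstar = Mj x j.
    rewrite hs (bigD1 j) //= big1 ?addr0 ?hlj ?scale1r // => i /hz ->.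
    by rewrite scale0r.
  exists j; rewrite /Vreg -hsE; apply/eqP; rewrite -subr_eq0; apply/eqP.
  by have := hc j; rewrite hlj mul1r.
have h31 : (exists j, Vreg x j (Mj x j)) -> card_Lambda_is x sstar 1.
  move=> [j hV]; have hsE := hA j hV.
  split.
    exists (fun i => if i == j then 1 else 0).
      split.
      - by move=> i; case: ifP.
      - by rewrite (bigD1 j) //= eqxx big1 ?addr0 // => i /negbTE ->.
      - rewrite hsE (bigD1 j) //= eqxx scale1r big1 ?addr0 // => i /negbTE ->.
        by rewrite scale0r.
      - move=> i; case: eqP => [->|_]; last by rewrite mul0r.
        by rewrite hsE hV subrr mulr0.
    rewrite /nnz.
    have -> : [set i | (if i == j then (1 : R) else 0) != 0] = [set j].
      apply/setP => i; rewrite !inE; case: (eqVneq i j) => [_|hij] /=.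
        by rewrite oner_eq0.
      by rewrite eqxx.
    exact: cards1.
  move=> lam [h0 hsum _ _]; rewrite /nnz card_gt0; apply/set0Pn.
  case: (pickP (fun i => lam i != 0)) => [i hi | hnone].
    by exists i; rewrite inE.
  move: hsum; rewrite big1 => [/eqP|i _]; first by rewrite eq_sym oner_eq0.
  by apply/eqP; move: (hnone i) => /= /negbFE.
have h32 : (exists j, Vreg x j (Mj x j)) -> sstar = Mj x r.
  move=> [j hV]; rewrite (hA j hV) /Mj.
  by rewrite (j_eq_r J_nonempty r_far hV).
have h23 : sstar = Mj x r -> exists j, Vreg x j (Mj x j).
  move=> hsE; exists r; apply: Mr_Vreg => // t; rewrite -hsE.
  exact: sstar_unique.
tfae => [h|h|h].
- exact: h32 (h13 h).
- exact: h23.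
- exact: h31.
Qed.
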